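(* Let $V$ be a finite dimensional normed vector space and $H\le O(V)$. Let $L_i:H\to\mathbb{R}$ be group-norms such that the functions $d_i(u,v)=\inf_{a\in H}\sqrt{L_i(a)^2+\|au-v\|^2}$ converge uniformly on compact sets to a semi-metric $d_\infty$ on $V$. Let $$G_0=\{g\in O(V):\ \exists\,a_i\in H\text{ with } a_i\to g \text{ and }\liminf_{i\to\infty}L_i(a_i)=0\}.$$ Then for $u,v\in V$, $d_\infty(u,v)=0$ if and only if $v=gu$ for some $g\in G_0$.
   Context: $O(V)$ is the group of norm-preserving linear maps of $V$. A group-norm on $H$ is $L:H\to\mathbb{R}$ with $L(a)\ge0$, $L(a)=0$ iff $a=e$, $L(a^{-1})=L(a)$, $L(ab)\le L(a)+L(b)$. *)

(* Defs.v *)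
From Stdlib Require Import Reals Lra List.
From Stdlib Require Fin.
Open Scope R_scope.

(* A finite dimensional real vector space, modelled as R^n = (Fin.t n -> R),
   equipped with an ARBITRARY norm N (every finite-dimensional normed space is
   isometrically isomorphic to such a space). *)
Definition vec (n : nat) : Type := Fin.t n -> R.
Definition vadd {n} (x y : vec n) : vec n := fun k => x k + y k.
Definition vscal {n} (c : R) (x : vec n) : vec n := fun k => c * x k.
Definition vsub {n} (x y : vec n) : vec n := fun k => x k - y k.

Record is_norm {n} (N : vec n -> R) : Prop := {
  norm_nonneg : forall x, 0 <= N x;
  norm_eq0 : forall x, N x = 0 <-> (forall k, x k = 0);
  norm_scal : forall c x, N (vscal c x) = Rabs c * N x;
  norm_triangle : forall x y, N (vadd x y) <= N x + N y }.

Definition linear_map {n} (f : vec n -> vec n) : Prop :=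
  (forall x y, f (vadd x y) = vadd (f x) (f y)) /\
  (forall c x, f (vscal c x) = vscal c (f x)).

Definition in_O {n} (N : vec n -> R) (g : vec n -> vec n) : Prop :=
  linear_map g /\ forall x, N (g x) = N x.

Definition is_subgroup_O {n} (N : vec n -> R) (H : (vec n -> vec n) -> Prop) : Prop :=
  (forall a, H a -> in_O N a) /\
  H (fun x => x) /\
  (forall a b, H a -> H b -> H (fun x => a (b x))) /\
  (forall a, H a -> exists b, H b /\ (forall x, b (a x) = x) /\ (forall x, a (b x) = x)).

Definition group_norm {n} (H : (vec n -> vec n) -> Prop) (L : (vec n -> vec n) -> R) : Prop :=
  (forall a, H a -> 0 <= L a) /\
  (forall a, H a -> (L a = 0 <-> a = (fun x => x))) /\
  (forall a b, H a -> H b -> (forall x, b (a x) = x) -> (forall x, a (b x) = x) -> L b = L a) /\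
  (forall a b, H a -> H b -> L (fun x => a (b x)) <= L a + L b).

Definition is_inf (S : R -> Prop) (r : R) : Prop :=
  (forall x, S x -> r <= x) /\ (forall m, (forall x, S x -> m <= x) -> m <= r).

Definition open2 {n} (N : vec n -> R) (U : vec n -> vec n -> Prop) : Prop :=
  forall u v, U u v -> exists e, 0 < e /\
    forall u' v', N (vsub u' u) < e -> N (vsub v' v) < e -> U u' v'.

Definition compact2 {n} (N : vec n -> R) (K : vec n -> vec n -> Prop) : Prop :=
  forall (I : Type) (U : I -> vec n -> vec n -> Prop),
    (forall i, open2 N (U i)) ->
    (forall u v, K u v -> exists i, U i u v) ->
    exists l : list I, forall u v, K u v -> exists i, In i l /\ U i u v.

Definition unif_cv_compact {n} (N : vec n -> R)
  (d : nat -> vec n -> vec n -> R) (dinf : vec n -> vec n -> R) : Prop :=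
  forall K, compact2 N K -> forall eps, 0 < eps ->
    exists M : nat, forall i, (M <= i)%nat -> forall u v, K u v ->
      Rabs (d i u v - dinf u v) < eps.

Definition semimetric {n} (d : vec n -> vec n -> R) : Prop :=
  (forall u v, 0 <= d u v) /\ (forall u, d u u = 0) /\
  (forall u v, d u v = d v u) /\ (forall u v w, d u w <= d u v + d v w).

Definition liminf_eq (s : nat -> R) (l : R) : Prop :=
  forall eps, 0 < eps ->
    (exists M : nat, forall i, (M <= i)%nat -> l - eps < s i) /\
    (forall M : nat, exists i, (M <= i)%nat /\ s i < l + eps).

Definition in_G0 {n} (N : vec n -> R) (H : (vec n -> vec n) -> Prop)
  (L : nat -> (vec n -> vec n) -> R) (g : vec n -> vec n) : Prop :=
  in_O N g /\
  exists a : nat -> (vec n -> vec n),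
    (forall i, H (a i)) /\
    (forall x, Un_cv (fun i => N (vsub (a i x) (g x))) 0) /\
    liminf_eq (fun i => L i (a i)) 0.

(* Main.v *)
Require Import Defs.
From Stdlib Require Import Reals Lra Lia List Classical ClassicalEpsilon FunctionalExtensionality Rtopology.
Open Scope R_scope.

Lemma inv_small (eps : R) : 0 < eps -> exists K : nat, forall k, (K <= k)%nat -> / INR (S k) < eps.
Proof.
  intros He. destruct (archimed_cor1 eps He) as [m [Hm Hm0]].
  exists m. intros k Hk.
  assert (INR m <= INR (S k)) by (apply le_INR; lia).
  assert (0 < INR m) by (apply lt_0_INR; lia).
  assert (/ INR (S k) <= / INR m) by (apply Rinv_le_contravar; lra). lra.
Qed.

Lemma BW_R (u : nat -> R) (B : R) : (forall k, Rabs (u k) <= B) ->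
  exists phi : nat -> nat, (forall k, (phi k < phi (S k))%nat) /\
    exists a, Un_cv (fun k => u (phi k)) a.
Proof.
  intros HB.
  destruct (Bolzano_Weierstrass u (fun c => -B <= c <= B)) as [a Ha].
  - apply compact_P3.
  - intros k. specialize (HB k). revert HB; unfold Rabs; destruct (Rcase_abs (u k)); intros; lra.
  - assert (Hp : forall (k N : nat), exists p, (N <= p)%nat /\ Rabs (u p - a) < / INR (S k)).
    { intros k N0. assert (Hpos : 0 < / INR (S k)) by (apply Rinv_0_lt_compat, lt_0_INR; lia).
      destruct (Ha (disc a (mkposreal _ Hpos)) N0) as [p [Hp1 Hp2]].
      - exists (mkposreal _ Hpos). intros y Hy. exact Hy.
      - exists p. split; [exact Hp1| exact Hp2]. }
    set (P := fun k N0 => proj1_sig (constructive_indefinite_description _ (Hp k N0))).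
    assert (HP : forall k N0, (N0 <= P k N0)%nat /\ Rabs (u (P k N0) - a) < / INR (S k)).
    { intros k N0. unfold P. destruct (constructive_indefinite_description _ _) as [p Hq]. exact Hq. }
    set (phi := fix phi k := match k with O => P O O | S k' => P (S k') (S (phi k')) end).
    exists phi. split.
    + intros k. simpl. destruct (HP (S k) (S (phi k))) as [H1 _]. simpl in H1. lia.
    + exists a. intros eps He. destruct (inv_small eps He) as [K HK].
      exists K. intros k Hk. unfold R_dist.
      assert (Rabs (u (phi k) - a) < / INR (S k)).
      { destruct k; simpl; apply HP. }
      specialize (HK k Hk). lra.
Qed.

Definition incr (phi : nat -> nat) := forall k, (phi k < phi (S k))%nat.

Lemma incr_mono phi : incr phi -> forall k1 k2, (k1 < k2)%nat -> (phi k1 < phi k2)%nat.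
Proof.
  intros H k1 k2 Hk. induction Hk.
  - apply H.
  - specialize (H m). lia.
Qed.

Lemma incr_ge phi : incr phi -> forall k, (k <= phi k)%nat.
Proof. intros H k. induction k. lia. specialize (H k). lia. Qed.

Lemma incr_comp phi psi : incr phi -> incr psi -> incr (fun k => phi (psi k)).
Proof. intros H1 H2 k. apply incr_mono; auto. Qed.

Lemma cv_sub u a phi : incr phi -> Un_cv u a -> Un_cv (fun k => u (phi k)) a.
Proof.
  intros Hp Hu eps He. destruct (Hu eps He) as [K HK]. exists K. intros k Hk.
  apply HK. pose proof (incr_ge phi Hp k). lia.
Qed.

Lemma BW_family {I : Type} (l : list I) (s : nat -> I -> R) (B : I -> R) :
  (forall k i, In i l -> Rabs (s k i) <= B i) ->
  exists phi, incr phi /\ forall i, In i l -> exists a, Un_cv (fun k => s (phi k) i) a.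
Proof.
  induction l as [|i0 l IH]; intros HB.
  - exists (fun k => k). split. intros k; lia. intros i [].
  - destruct IH as [phi1 [Hp1 Hl]].
    { intros k i Hi. apply HB. right. exact Hi. }
    destruct (BW_R (fun k => s (phi1 k) i0) (B i0)) as [psi [Hpsi [a Ha]]].
    { intros k. apply HB. left. reflexivity. }
    exists (fun k => phi1 (psi k)). split.
    + apply incr_comp; auto.
    + intros i [Hi|Hi].
      * subst i. exists a. exact Ha.
      * destruct (Hl i Hi) as [b Hb]. exists b.
        apply (cv_sub (fun k => s (phi1 k) i) b psi Hpsi Hb).
Qed.

Fixpoint enum (n : nat) : list (Fin.t n) :=
  match n with O => nil | S m => Fin.F1 :: map Fin.FS (enum m) end.

Lemma enum_In n (x : Fin.t n) : In x (enum n).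
Proof.
  induction x; simpl. left; reflexivity. right. apply in_map. exact IHx.
Qed.

Lemma NoDup_map_inj {A B} (f : A -> B) (l : list A) :
  (forall x y, f x = f y -> x = y) -> NoDup l -> NoDup (map f l).
Proof.
  intros Hf Hl. induction Hl; simpl; constructor; auto.
  intros H1. apply in_map_iff in H1. destruct H1 as [y [Hy Hy']].
  apply Hf in Hy. subst. contradiction.
Qed.

Lemma enum_NoDup n : NoDup (enum n).
Proof.
  induction n; simpl. constructor. constructor.
  - intros H. apply in_map_iff in H. destruct H as [y [Hy _]]. inversion Hy.
  - apply NoDup_map_inj; auto. intros x y H. apply Fin.FS_inj. exact H.
Qed.

Definition sumL {A} (l : list A) (f : A -> R) : R := fold_right (fun j a => f j + a) 0 l.

Lemma sumL_plus {A} (l : list A) f g : sumL l (fun j => f j + g j) = sumL l f + sumL l g.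
Proof. induction l; simpl; lra. Qed.

Lemma sumL_scal {A} (l : list A) c f : sumL l (fun j => c * f j) = c * sumL l f.
Proof. induction l; simpl. ring. rewrite IHl. ring. Qed.

Lemma sumL_ext {A} (l : list A) f g : (forall j, In j l -> f j = g j) -> sumL l f = sumL l g.
Proof. induction l; simpl; intros H; auto. rewrite H, IHl; auto. Qed.

Lemma sumL_le {A} (l : list A) f g : (forall j, In j l -> f j <= g j) -> sumL l f <= sumL l g.
Proof. induction l; simpl; intros H. lra. pose proof (H a (or_introl eq_refl)).
  assert (sumL l f <= sumL l g) by auto. lra. Qed.

Lemma sumL_nonneg {A} (l : list A) f : (forall j, In j l -> 0 <= f j) -> 0 <= sumL l f.
Proof. intros H. replace 0 with (sumL l (fun _ => 0)). apply sumL_le; auto.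
  induction l; simpl; auto. rewrite IHl. ring. intros; apply H; right; auto. Qed.

Lemma sumL_term {A} (l : list A) f j : (forall j, In j l -> 0 <= f j) -> In j l -> f j <= sumL l f.
Proof.
  induction l; simpl; intros H Hj. destruct Hj.
  destruct Hj as [Hj|Hj].
  - subst. assert (0 <= sumL l f) by (apply sumL_nonneg; auto). lra.
  - assert (f j <= sumL l f) by auto. pose proof (H a (or_introl eq_refl)). lra.
Qed.

Lemma sumL_delta {n} (l : list (Fin.t n)) (f : Fin.t n -> R) k : NoDup l -> In k l ->
  sumL l (fun j => f j * (if Fin.eq_dec j k then 1 else 0)) = f k.
Proof.
  induction l; simpl; intros Hd Hk. destruct Hk.
  inversion Hd; subst. destruct (Fin.eq_dec a k).
  - subst. replace (sumL l _) with 0. ring.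
    symmetry. transitivity (sumL l (fun _ => 0)).
    apply sumL_ext. intros j Hj. destruct (Fin.eq_dec j k). subst; contradiction. ring.
    clear. induction l; simpl; auto. rewrite IHl; ring.
  - destruct Hk as [Hk|Hk]. contradiction. rewrite IHl; auto. ring.
Qed.

Lemma sumL_cv {A} (l : list A) (f : nat -> A -> R) (g : A -> R) :
  (forall j, In j l -> Un_cv (fun k => f k j) (g j)) ->
  Un_cv (fun k => sumL l (f k)) (sumL l g).
Proof.
  induction l; simpl; intros H.
  - intros eps He. exists O. intros. unfold R_dist. rewrite Rminus_0_r, Rabs_R0. lra.
  - apply CV_plus. apply H; auto. apply IHl. intros; apply H; auto.
Qed.

Definition lc {n} (l : list (Fin.t n)) (c : Fin.t n -> R) (w : Fin.t n -> vec n) : vec n :=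
  fold_right (fun j acc => vadd (vscal (c j) (w j)) acc) (fun _ => 0) l.

Lemma lc_app {n} l c (w : Fin.t n -> vec n) k : lc l c w k = sumL l (fun j => c j * w j k).
Proof. induction l; simpl. reflexivity. unfold vadd, vscal. rewrite <- IHl. reflexivity. Qed.

Definition ebas {n} (j : Fin.t n) : vec n := fun k => if Fin.eq_dec j k then 1 else 0.

Lemma decomp {n} (x : vec n) : x = lc (enum n) x ebas.
Proof.
  apply functional_extensionality. intros k. rewrite lc_app. unfold ebas.
  rewrite sumL_delta; auto. apply enum_NoDup. apply enum_In.
Qed.

Lemma lin_zero {n} (f : vec n -> vec n) : linear_map f -> f (fun _ => 0) = (fun _ => 0).
Proof.
  intros [_ Hs]. replace (fun _ : Fin.t n => 0) with (vscal 0 (fun _ : Fin.t n => 0)) at 1.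
  rewrite Hs. apply functional_extensionality; intros k; unfold vscal; ring.
  apply functional_extensionality; intros k; unfold vscal; ring.
Qed.

Lemma lin_lc {n} (f : vec n -> vec n) l c w : linear_map f ->
  f (lc l c w) = lc l c (fun j => f (w j)).
Proof.
  intros Hf. induction l; simpl. apply lin_zero; auto.
  destruct Hf as [Ha Hs]. rewrite Ha, Hs, IHl. reflexivity.
Qed.

Lemma norm_zero {n} (N : vec n -> R) : is_norm N -> N (fun _ => 0) = 0.
Proof. intros HN. apply (norm_eq0 N HN). auto. Qed.

Lemma norm_lc {n} (N : vec n -> R) l c w : is_norm N ->
  N (lc l c w) <= sumL l (fun j => Rabs (c j) * N (w j)).
Proof.
  intros HN. induction l; simpl.
  - rewrite norm_zero; auto. lra.
  - eapply Rle_trans. apply (norm_triangle N HN). rewrite (norm_scal N HN). lra.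
Qed.

Lemma N_upper {n} (N : vec n -> R) x : is_norm N ->
  N x <= sumL (enum n) (fun j => Rabs (x j) * N (ebas j)).
Proof. intros HN. rewrite (decomp x) at 1. apply norm_lc; auto. Qed.

Definition Ssum {n} (x : vec n) : R := sumL (enum n) (fun j => Rabs (x j)).

Lemma coord_le {n} (x : vec n) k : Rabs (x k) <= Ssum x.
Proof. unfold Ssum. apply (sumL_term _ (fun j => Rabs (x j))). intros; apply Rabs_pos. apply enum_In. Qed.

Lemma norm_sub_tri {n} (N : vec n -> R) x y : is_norm N -> N x <= N y + N (vsub x y).
Proof.
  intros HN. replace x with (vadd y (vsub x y)) at 1. apply (norm_triangle N HN).
  apply functional_extensionality; intros k; unfold vadd, vsub; ring.
Qed.

Lemma norm_sub_sym {n} (N : vec n -> R) x y : is_norm N -> N (vsub x y) = N (vsub y x).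
Proof.
  intros HN. replace (vsub x y) with (vscal (-1) (vsub y x)).
  rewrite (norm_scal N HN). replace (Rabs (-1)) with 1. ring. rewrite Rabs_left; lra.
  apply functional_extensionality; intros k; unfold vscal, vsub; ring.
Qed.

Lemma cv_const c : Un_cv (fun _ => c) c.
Proof. intros eps He. exists O. intros. unfold R_dist. rewrite Rminus_diag, Rabs_R0. lra. Qed.

Lemma cv_abs u a : Un_cv u a -> Un_cv (fun k => Rabs (u k)) (Rabs a).
Proof.
  intros H eps He. destruct (H eps He) as [K HK]. exists K. intros k Hk.
  specialize (HK k Hk). unfold R_dist in *. eapply Rle_lt_trans. apply Rabs_triang_inv2. exact HK.
Qed.

Lemma cv_diff0 u a c : Un_cv u a -> Un_cv (fun k => Rabs (a - u k) * c) 0.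
Proof.
  intros H. replace 0 with (Rabs 0 * c) by (rewrite Rabs_R0; ring).
  apply CV_mult; [|apply cv_const].
  apply cv_abs. replace 0 with (a - a) by ring. apply CV_minus. apply cv_const. exact H.
Qed.

Lemma cv_le_lim a r l : (forall k, a <= r k) -> Un_cv r l -> a <= l.
Proof.
  intros H Hr. destruct (Rle_lt_dec a l) as [|Hlt]; auto.
  destruct (Hr (a - l)) as [K HK]. lra. specialize (HK K (le_n K)). specialize (H K).
  unfold R_dist in HK. apply Rabs_def2 in HK. lra.
Qed.

Lemma cv_squeeze f r : (forall k, 0 <= f k <= r k) -> Un_cv r 0 -> Un_cv f 0.
Proof.
  intros H Hr eps He. destruct (Hr eps He) as [K HK]. exists K. intros k Hk.
  specialize (HK k Hk). specialize (H k). unfold R_dist in *. rewrite Rminus_0_r in *.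
  rewrite Rabs_right in * by lra. lra.
Qed.

Lemma cv_inv_sub phi : incr phi -> Un_cv (fun k => / INR (S (phi k))) 0.
Proof.
  intros Hp eps He. destruct (inv_small eps He) as [K HK]. exists K. intros k Hk.
  unfold R_dist. rewrite Rminus_0_r. rewrite Rabs_right.
  apply HK. pose proof (incr_ge phi Hp k). lia.
  left. apply Rinv_0_lt_compat, lt_0_INR. lia.
Qed.

Lemma cv_unique_const c l : Un_cv (fun _ => c) l -> l = c.
Proof. intros H. eapply UL_sequence. exact H. apply cv_const. Qed.

Lemma Ssum_scal {n} c (x : vec n) : Ssum (vscal c x) = Rabs c * Ssum x.
Proof. unfold Ssum, vscal. rewrite <- sumL_scal. apply sumL_ext. intros; apply Rabs_mult. Qed.

Lemma Ssum_zero {n} (x : vec n) : Ssum x = 0 -> forall k, x k = 0.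
Proof.
  intros H k. pose proof (coord_le x k). rewrite H in H0. pose proof (Rabs_pos (x k)).
  assert (Rabs (x k) = 0) by lra. destruct (Req_dec (x k) 0); auto. apply Rabs_no_R0 in H3. contradiction.
Qed.

Lemma lower_bound {n} (N : vec n -> R) : is_norm N ->
  exists c, 0 < c /\ forall x, Ssum x <= c * N x.
Proof.
  intros HN. apply NNPP. intros Hno.
  assert (Hm : forall m : nat, exists x : vec n, INR (S m) * N x < Ssum x).
  { intros m. apply NNPP. intros Hx. apply Hno. exists (INR (S m)). split.
    apply lt_0_INR; lia. intros x. apply Rnot_lt_le. intros Hc. apply Hx. exists x. exact Hc. }
  set (xs := fun m => proj1_sig (constructive_indefinite_description _ (Hm m))).
  assert (Hxs : forall m, INR (S m) * N (xs m) < Ssum (xs m)).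
  { intros m. unfold xs. destruct (constructive_indefinite_description _ _) as [x Hx]. exact Hx. }
  assert (Hpos : forall m, 0 < Ssum (xs m)).
  { intros m. specialize (Hxs m). assert (0 <= INR (S m) * N (xs m)).
    apply Rmult_le_pos. apply pos_INR. apply (norm_nonneg N HN). lra. }
  set (y := fun m => vscal (/ Ssum (xs m)) (xs m)).
  assert (Hy1 : forall m, Ssum (y m) = 1).
  { intros m. unfold y. rewrite Ssum_scal. rewrite Rabs_right. field. apply Rgt_not_eq, Hpos.
    left. apply Rinv_0_lt_compat, Hpos. }
  assert (Hy2 : forall m, N (y m) < / INR (S m)).
  { intros m. unfold y. rewrite (norm_scal N HN). rewrite Rabs_right.
    2:{ left. apply Rinv_0_lt_compat, Hpos. }
    specialize (Hxs m). specialize (Hpos m). assert (0 < INR (S m)) by (apply lt_0_INR; lia).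
    apply (Rmult_lt_reg_l (Ssum (xs m) * INR (S m))). apply Rmult_lt_0_compat; lra.
    replace (Ssum (xs m) * INR (S m) * (/ Ssum (xs m) * N (xs m))) with (INR (S m) * N (xs m)) by (field; lra).
    replace (Ssum (xs m) * INR (S m) * / INR (S m)) with (Ssum (xs m)) by (field; lra). lra. }
  destruct (BW_family (enum n) (fun k j => y k j) (fun _ => 1)) as [phi [Hphi Hlim]].
  { intros k j _. rewrite <- (Hy1 k). apply coord_le. }
  assert (Hz : forall j, exists a, Un_cv (fun k => y (phi k) j) a).
  { intros j. apply Hlim. apply enum_In. }
  set (z := fun j => proj1_sig (constructive_indefinite_description _ (Hz j))).
  assert (Hzc : forall j, Un_cv (fun k => y (phi k) j) (z j)).
  { intros j. unfold z. destruct (constructive_indefinite_description _ _) as [a Ha]. exact Ha. }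
  assert (HS : Ssum z = 1).
  { apply cv_unique_const. eapply Un_cv_ext. 2:{ apply (sumL_cv (enum n) (fun k j => Rabs (y (phi k) j))).
      intros j _. apply cv_abs. apply Hzc. }
    intros k. simpl. apply (Hy1 (phi k)). }
  assert (HNz : N z <= 0).
  { apply (cv_le_lim _ (fun k => / INR (S (phi k)) +
        sumL (enum n) (fun j => Rabs (z j - y (phi k) j) * N (ebas j)))).
    - intros k. eapply Rle_trans. apply (norm_sub_tri N z (y (phi k)) HN).
      apply Rplus_le_compat. left. apply Hy2. apply N_upper; auto.
    - replace 0 with (0 + sumL (enum n) (fun _ => 0)).
      apply CV_plus. apply cv_inv_sub; auto. apply sumL_cv. intros j _. apply cv_diff0. apply Hzc.
      clear. induction (enum n); simpl; lra. }
  assert (N z = 0) by (pose proof (norm_nonneg N HN z); lra).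
  pose proof (proj1 (norm_eq0 N HN z) H) as Hz0.
  assert (Ssum z = 0).
  { unfold Ssum. transitivity (sumL (enum n) (fun _ : Fin.t n => 0)). apply sumL_ext.
    intros j _. rewrite Hz0. apply Rabs_R0. clear. induction (enum n); simpl; lra. }
  lra.
Qed.

Lemma sumL_minus {A} (l : list A) f g : sumL l (fun j => f j - g j) = sumL l f - sumL l g.
Proof. induction l; simpl; lra. Qed.

Lemma O_compact {n} (N : vec n -> R) (a : nat -> vec n -> vec n) :
  is_norm N -> (forall k, in_O N (a k)) ->
  exists phi, incr phi /\ exists g, in_O N g /\
    forall x, Un_cv (fun k => N (vsub (a (phi k) x) (g x))) 0.
Proof.
  intros HN Ha. destruct (lower_bound N HN) as [c [Hc HcN]].
  destruct (BW_family (list_prod (enum n) (enum n)) (fun k p => a k (ebas (fst p)) (snd p))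
     (fun p => c * N (ebas (fst p)))) as [phi [Hphi Hlim]].
  { intros k [j m] _. simpl. eapply Rle_trans. apply coord_le. eapply Rle_trans. apply HcN.
    destruct (Ha k) as [_ Hi]. rewrite Hi. lra. }
  assert (Hl : forall j m, exists b, Un_cv (fun k => a (phi k) (ebas j) m) b).
  { intros j m. apply (Hlim (j, m)). apply in_prod; apply enum_In. }
  set (col := fun j m => proj1_sig (constructive_indefinite_description _ (Hl j m))).
  assert (Hcol : forall j m, Un_cv (fun k => a (phi k) (ebas j) m) (col j m)).
  { intros j m. unfold col. destruct (constructive_indefinite_description _ _) as [b Hb]. exact Hb. }
  set (g := fun x : vec n => lc (enum n) x col).
  assert (Hconv : forall x, Un_cv (fun k => N (vsub (a (phi k) x) (g x))) 0).
  { intros x. apply (cv_squeeze _ (fun k => sumL (enum n) (fun j => Rabs (x j) *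
        sumL (enum n) (fun m => Rabs (col j m - a (phi k) (ebas j) m) * N (ebas m))))).
    - intros k. split. apply (norm_nonneg N HN).
      assert (E : vsub (a (phi k) x) (g x) = lc (enum n) x (fun j => vsub (a (phi k) (ebas j)) (col j))).
      { rewrite (decomp x) at 1. rewrite lin_lc by (apply (Ha (phi k))).
        apply functional_extensionality; intros m. unfold vsub, g. rewrite !lc_app.
        rewrite <- sumL_minus. apply sumL_ext. intros; ring. }
      rewrite E. eapply Rle_trans. apply norm_lc; auto. apply sumL_le. intros j _.
      apply Rmult_le_compat_l. apply Rabs_pos. eapply Rle_trans. apply N_upper; auto.
      apply sumL_le. intros m _. unfold vsub. rewrite Rabs_minus_sym. lra.
    - replace 0 with (sumL (enum n) (fun j => Rabs (x j) * sumL (enum n) (fun _ : Fin.t n => 0))).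
      2:{ transitivity (sumL (enum n) (fun _ : Fin.t n => 0)). apply sumL_ext. intros.
          replace (sumL (enum n) (fun _ : Fin.t n => 0)) with 0. ring.
          clear. induction (enum n); simpl; lra. clear. induction (enum n); simpl; lra. }
      apply sumL_cv. intros j _. apply CV_mult. apply cv_const. apply sumL_cv.
      intros m _. apply cv_diff0. apply Hcol. }
  exists phi. split; auto. exists g. split; [|exact Hconv].
  split; [split|].
  - intros x y. apply functional_extensionality; intros m. unfold g, vadd. rewrite !lc_app.
    rewrite <- sumL_plus. apply sumL_ext. intros; ring.
  - intros c0 x. apply functional_extensionality; intros m. unfold g, vscal. rewrite !lc_app.
    rewrite <- sumL_scal. apply sumL_ext. intros; ring.
  - intros x. assert (Hk : forall k, N (a (phi k) x) = N x) by (intros k; apply (Ha (phi k))).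
    apply Rle_antisym.
    + assert (N (g x) - N x <= 0); [|lra].
      eapply cv_le_lim; [|apply (Hconv x)]. intros k. simpl. rewrite <- (Hk k).
      pose proof (norm_sub_tri N (g x) (a (phi k) x) HN). rewrite norm_sub_sym in H; auto. lra.
    + assert (N x - N (g x) <= 0); [|lra].
      eapply cv_le_lim; [|apply (Hconv x)]. intros k. simpl. rewrite <- (Hk k).
      pose proof (norm_sub_tri N (a (phi k) x) (g x) HN). lra.
Qed.

Lemma singleton_compact {n} (N : vec n -> R) u v : compact2 N (fun u' v' => u' = u /\ v' = v).
Proof.
  intros I U _ Hcov. destruct (Hcov u v (conj eq_refl eq_refl)) as [i Hi].
  exists (i :: nil). intros u' v' [-> ->]. exists i. split; auto. left; auto.
Qed.

Lemma pt_cv {n} (N : vec n -> R) d dinf u v : unif_cv_compact N d dinf ->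
  Un_cv (fun i => d i u v) (dinf u v).
Proof.
  intros Hu eps He. destruct (Hu _ (singleton_compact N u v) eps He) as [M HM].
  exists M. intros i Hi. apply (HM i Hi u v). auto.
Qed.

Lemma inf_approx S r eps : is_inf S r -> 0 < eps -> exists x, S x /\ x < r + eps.
Proof.
  intros [_ H2] He. apply NNPP. intros Hn.
  assert (r + eps <= r). { apply H2. intros x Hx. apply Rnot_lt_le. intros Hc. apply Hn. eauto. }
  lra.
Qed.

Lemma sqrt_ge_l a b : 0 <= a -> a <= sqrt (a ^ 2 + b ^ 2).
Proof.
  intros Ha. rewrite <- (sqrt_pow2 a Ha) at 1. apply sqrt_le_1_alt.
  assert (0 <= b ^ 2) by (apply pow2_ge_0). lra.
Qed.

Lemma sqrt_le_sum a b : 0 <= a -> 0 <= b -> sqrt (a ^ 2 + b ^ 2) <= a + b.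
Proof.
  intros Ha Hb. rewrite <- (sqrt_pow2 (a + b)) by lra. apply sqrt_le_1_alt.
  assert (0 <= a * b) by (apply Rmult_le_pos; auto). nra.
Qed.

Theorem mainTheorem13 (n : nat) (N : vec n -> R)
  (H : (vec n -> vec n) -> Prop)
  (L : nat -> (vec n -> vec n) -> R)
  (d : nat -> vec n -> vec n -> R) (dinf : vec n -> vec n -> R) :
  is_norm N ->
  is_subgroup_O N H ->
  (forall i, group_norm H (L i)) ->
  (forall i u v, is_inf (fun r => exists a, H a /\
        r = sqrt (L i a ^ 2 + N (vsub (a u) v) ^ 2)) (d i u v)) ->
  unif_cv_compact N d dinf ->
  semimetric dinf ->
  forall u v, dinf u v = 0 <-> exists g, in_G0 N H L g /\ v = g u.
Proof.
  intros HN HH HL Hinf Hcv Hsm u v.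
  assert (Lnn : forall i a, H a -> 0 <= L i a) by (intros i a Ha; apply (HL i); auto).
  assert (Hd := pt_cv N d dinf u v Hcv).
  split.
  - intros H0.
    assert (Ha : forall i, exists a, H a /\ sqrt (L i a ^ 2 + N (vsub (a u) v) ^ 2) < d i u v + / INR (S i)).
    { intros i. destruct (inf_approx _ _ (/ INR (S i)) (Hinf i u v)) as [r [[a [Ha1 Ha2]] Hr]].
      apply Rinv_0_lt_compat, lt_0_INR; lia. exists a. subst r. auto. }
    set (a := fun i => proj1_sig (constructive_indefinite_description _ (Ha i))).
    assert (Hai : forall i, H (a i) /\ sqrt (L i (a i) ^ 2 + N (vsub (a i u) v) ^ 2) < d i u v + / INR (S i)).
    { intros i. unfold a. destruct (constructive_indefinite_description _ _) as [b Hb]. exact Hb. }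
    assert (Hr : Un_cv (fun i => d i u v + / INR (S i)) 0).
    { replace 0 with (0 + 0) by ring. apply CV_plus. rewrite <- H0. exact Hd.
      apply (cv_inv_sub (fun k => k)). intros k; lia. }
    assert (HLa : Un_cv (fun i => L i (a i)) 0).
    { eapply cv_squeeze; [|exact Hr]. intros i. cbv beta. destruct (Hai i) as [H1 H2].
      pose proof (Lnn i (a i) H1) as H3. split; auto.
      pose proof (sqrt_ge_l (L i (a i)) (N (vsub (a i u) v)) H3). lra. }
    assert (HNa : Un_cv (fun i => N (vsub (a i u) v)) 0).
    { eapply cv_squeeze; [|exact Hr]. intros i. cbv beta. destruct (Hai i) as [H1 H2].
      pose proof (norm_nonneg N HN (vsub (a i u) v)) as H3. split; auto.
      pose proof (sqrt_ge_l (N (vsub (a i u) v)) (L i (a i)) H3) as H4. rewrite Rplus_comm in H4. lra. }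
    destruct (O_compact N a HN) as [phi [Hphi [g [Hg Hconv]]]].
    { intros k. apply (proj1 HH). apply Hai. }
    assert (Hvg : v = g u).
    { assert (Hz : N (vsub v (g u)) <= 0).
      { assert (Hc2 := CV_plus _ _ 0 0 (cv_sub _ _ phi Hphi HNa) (Hconv u)).
        rewrite Rplus_0_r in Hc2. eapply cv_le_lim; [|exact Hc2].
        intros k. cbv beta. replace (vsub v (g u)) with (vadd (vsub v (a (phi k) u)) (vsub (a (phi k) u) (g u))).
        eapply Rle_trans. apply (norm_triangle N HN). rewrite (norm_sub_sym N v); auto. lra.
        apply functional_extensionality; intros m; unfold vadd, vsub; ring. }
      assert (N (vsub v (g u)) = 0) by (pose proof (norm_nonneg N HN (vsub v (g u))); lra).
      pose proof (proj1 (norm_eq0 N HN _) H1) as Hz0.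
      apply functional_extensionality; intros m. specialize (Hz0 m). unfold vsub in Hz0. lra. }
    set (b := fun i => if excluded_middle_informative (exists k, phi k = i) then a i else a (phi i)).
    assert (Hb : forall i, H (b i)).
    { intros i. unfold b. destruct (excluded_middle_informative _); apply Hai. }
    exists g. split; [|exact Hvg]. split; [exact Hg|]. exists b. split; [exact Hb|]. split.
    + intros x eps He. destruct (Hconv x eps He) as [K HK]. exists (phi K). intros i Hi.
      unfold b. destruct (excluded_middle_informative _) as [[k Hk]|Hn].
      * subst i. apply HK. destruct (Compare_dec.le_lt_dec K k) as [l|l]; [lia|].
        pose proof (incr_mono phi Hphi k K l). lia.
      * apply HK. pose proof (incr_ge phi Hphi K). lia.
    + intros eps He. split.
      * exists O. intros i _. pose proof (Lnn i (b i) (Hb i)). lra.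
      * intros M. destruct (HLa eps He) as [M0 HM0]. exists (phi (M + M0)%nat).
        pose proof (incr_ge phi Hphi (M + M0)). split. lia.
        unfold b. destruct (excluded_middle_informative _) as [_|Hn].
        -- specialize (HM0 (phi (M + M0)%nat) ltac:(lia)). unfold R_dist in HM0.
           rewrite Rminus_0_r in HM0. apply Rabs_def2 in HM0. lra.
        -- exfalso. apply Hn. eauto.
  - intros [g [[Hg [a [Ha [Hac Hli]]]] ->]].
    destruct Hsm as [Hnn _]. pose proof (Hnn u (g u)) as Hnn0.
    destruct (Rle_lt_or_eq_dec 0 (dinf u (g u)) Hnn0) as [Hp|]; auto. exfalso.
    set (del := dinf u (g u)) in *.
    destruct (Hd (del / 2)) as [M HM]. lra.
    destruct (Hac u (del / 4)) as [M1 HM1]. lra.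
    destruct (proj2 (Hli (del / 4) ltac:(lra)) (M + M1)%nat) as [i [Hi HLi]].
    specialize (HM i ltac:(lia)). specialize (HM1 i ltac:(lia)).
    unfold R_dist in HM, HM1. rewrite Rminus_0_r in HM1.
    rewrite Rabs_right in HM1 by (apply Rle_ge, (norm_nonneg N HN)).
    apply Rabs_def2 in HM.
    assert (d i u (g u) <= sqrt (L i (a i) ^ 2 + N (vsub (a i u) (g u)) ^ 2)).
    { apply (proj1 (Hinf i u (g u))). exists (a i). auto. }
    pose proof (sqrt_le_sum (L i (a i)) (N (vsub (a i u) (g u))) (Lnn i (a i) (Ha i)) (norm_nonneg N HN _)).
    lra.
Qed.
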